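(* Let $n \geq 2$, $x \in \mathbb{R}^{n+1}$ with $|x| < 1$, and $\alpha \geq -n$. Then the weighted manifold $(S^n, g, \mu_x^{n,\alpha})$ satisfies the Curvature-Dimension condition $CD\left(n-1-\frac{n+\alpha}{4}, -\alpha\right)$.
   Context: $S^n \subset \mathbb{R}^{n+1}$ is the unit sphere with its canonical Riemannian metric $g$ (induced from the Euclidean metric $|\cdot|$ on $\mathbb{R}^{n+1}$), and $\sigma^n$ is the rotation-invariant (Haar) probability measure on $S^n$. For $n\ge 2$, $|x|<1$ and $\alpha\in\mathbb{R}$, $\mu_x^{n,\alpha}$ is the probability measure on $S^n$ given by $d\mu_x^{n,\alpha}(y) = \frac{c_x^{n,\alpha}}{|y-x|^{n+\alpha}}\, d\sigma^n(y)$, where $c_x^{n,\alpha}>0$ is the normalizing constant. Curvature-Dimension condition (tensorial definition): Let $(M^n,g)$ be a closed connected Riemannian manifold and $\mu$ a measure on $M$ with positive $C^2$ density $\Psi$ with respect to the Riemannian volume measure (equivalently, any constant multiple of it, e.g. with respect to $\sigma^n$ on the sphere). For $N \in (-\infty,\infty]$ define $\mathrm{Ric}_{g,\mu,N} := \mathrm{Ric}_g - \nabla_g^2 \log \Psi - \frac{1}{N-n} \nabla_g \log\Psi \otimes \nabla_g \log \Psi$, with conventions $1/\infty = 0$, $1/0 = +\infty$, $\infty\cdot 0 = 0$. For $\rho\in\mathbb{R}$, $(M,g,\mu)$ satisfies $CD(\rho,N)$ if $\mathrm{Ric}_{g,\mu,N} \geq \rho\, g$ as symmetric 2-tensors everywhere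 on $M$. (This tensorial definition is used for all $N$, including $N\in[0,n)$.) *)

(* Defs.v *)
From Stdlib Require Import Reals Lra.
Open Scope R_scope.

(* Points of R^{n+1} are represented as functions nat -> R; only the
   coordinates 0..n are used (sum_f_R0 f n sums indices 0..n). *)
Definition vec := nat -> R.

Definition dot (n : nat) (u v : vec) : R := sum_f_R0 (fun i => u i * v i) n.
Definition norm (n : nat) (u : vec) : R := sqrt (dot n u u).
Definition vsub (u v : vec) : vec := fun i => u i - v i.

Definition on_sphere (n : nat) (y : vec) : Prop := dot n y y = 1.

Definition geod (y v : vec) (t : R) : vec := fun i => cos t * y i + sin t * v i.

Definition second_order (F : R -> R) (d h : R) : Prop :=
  exists F' : R -> R,
    (forall t, derivable_pt_lim F t (F' t)) /\ F' 0 = d /\ derivable_pt_lim F' 0 h.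

(* Ricci curvature of the round unit sphere S^n evaluated on a unit tangent
   vector: Ric_g = (n-1) g. *)
Definition ric_sphere (n : nat) : R := INR n - 1.

(* Along the geodesic t |-> geod y v t with g(v,v)=1:
     d = g(grad log Psi, v),  h = Hess log Psi (v,v).
   Ric_{g,mu,N}(v,v) = (n-1) - h - 1/(N-n) d^2, with the conventions
   1/0 = +infinity and infinity * 0 = 0 when N = n. Since the tensor
   inequality Ric_{g,mu,N} >= rho g is homogeneous of degree 2, it suffices
   (and is equivalent) to test it on unit tangent vectors. *)
Definition CD_sphere (n : nat) (Psi : vec -> R) (rho N : R) : Prop :=
  forall y v : vec,
    on_sphere n y -> dot n v v = 1 -> dot n y v = 0 ->
    exists d h : R,
      second_order (fun t => ln (Psi (geod y v t))) d h /\
      (N = INR n -> d = 0 /\ ric_sphere n - h >= rho) /\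
      (N <> INR n -> ric_sphere n - h - / (N - INR n) * d ^ 2 >= rho).

(* Density of mu_x^{n,alpha} w.r.t. sigma^n, up to the positive constant c:
   y |-> c / |y - x|^{n+alpha}. *)
Definition density (n : nat) (alpha c : R) (x : vec) : vec -> R :=
  fun y => c * Rpower (norm n (vsub y x)) (- (INR n + alpha)).

(* Main.v *)
Require Import Defs.
From Stdlib Require Import Reals Lra Psatz FunctionalExtensionality.
From Coquelicot Require Import Coquelicot.
Import Defs.
Open Scope R_scope.

Lemma expand_geod : forall (y v x : vec) (c s : R) N,
  sum_f_R0 (fun i => (c * y i + s * v i - x i) * (c * y i + s * v i - x i)) N =
  c^2 * sum_f_R0 (fun i => y i * y i) N + s^2 * sum_f_R0 (fun i => v i * v i) N
  + sum_f_R0 (fun i => x i * x i) N + 2*c*s * sum_f_R0 (fun i => y i * v i) N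
  - 2*c * sum_f_R0 (fun i => x i * y i) N - 2*s * sum_f_R0 (fun i => x i * v i) N.
Proof. intros; induction N; simpl; [ring| rewrite IHN; ring]. Qed.

Lemma expand_bessel : forall (y v x : vec) (a b : R) N,
  sum_f_R0 (fun i => (x i - a * y i - b * v i) * (x i - a * y i - b * v i)) N =
  a^2 * sum_f_R0 (fun i => y i * y i) N + b^2 * sum_f_R0 (fun i => v i * v i) N
  + sum_f_R0 (fun i => x i * x i) N + 2*a*b * sum_f_R0 (fun i => y i * v i) N
  - 2*a * sum_f_R0 (fun i => x i * y i) N - 2*b * sum_f_R0 (fun i => x i * v i) N.
Proof. intros; induction N; simpl; [ring| rewrite IHN; ring]. Qed.

Lemma sq_sum_ge0 : forall (u : vec) N, 0 <= sum_f_R0 (fun i => u i * u i) N.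
Proof. intros; induction N; simpl; nra. Qed.

Theorem theorem1p1 :
  forall (n : nat) (x : vec) (alpha c : R),
    (2 <= n)%nat -> norm n x < 1 -> alpha >= - INR n -> 0 < c ->
    CD_sphere n (density n alpha c x) (INR n - 1 - (INR n + alpha) / 4) (- alpha).
Proof.
  intros n x alpha c Hn Hx Ha Hc y v Hy Hv Hyv.
  unfold on_sphere, dot in *.
  set (r := sum_f_R0 (fun i => x i * x i) n).
  set (a := sum_f_R0 (fun i => x i * y i) n).
  set (b := sum_f_R0 (fun i => x i * v i) n).
  set (k := INR n + alpha).
  assert (Hk : 0 <= k) by (unfold k; lra).
  assert (Hr0 : 0 <= r) by apply sq_sum_ge0.
  assert (Hr1 : r < 1).
  { unfold norm, dot in Hx. fold r in Hx.
    pose proof (sqrt_sqrt r Hr0). pose proof (sqrt_pos r). nra. }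
  assert (Hbes : a^2 + b^2 <= r).
  { pose proof (sq_sum_ge0 (fun i => x i - a * y i - b * v i) n) as H.
    simpl in H. rewrite expand_bessel, Hy, Hv, Hyv in H. fold r a b in H. nra. }
  set (f := fun t => 1 + r - 2 * (a * cos t + b * sin t)).
  assert (Hf : forall t, 0 < f t).
  { intro t. unfold f. pose proof (sin2_cos2 t). unfold Rsqr in *.
    assert (Hs : (a * cos t + b * sin t)^2 <= r).
    { assert ((a * cos t + b * sin t)^2 <= (a^2+b^2)*(cos t ^2 + sin t^2))
        by (assert (0 <= (a * sin t - b * cos t)^2) by (apply pow2_ge_0);
            assert ((a^2+b^2)*(cos t ^2 + sin t^2) = (a * cos t + b * sin t)^2 + (a * sin t - b * cos t)^2) by ring; lra).
      replace (cos t ^2 + sin t^2) with 1 in H0 by (simpl; lra). lra. }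
    nra. }
  assert (HL : (fun t => ln (density n alpha c x (geod y v t))) =
               (fun t => ln c - k / 2 * ln (f t))).
  { apply functional_extensionality; intro t.
    unfold density, norm, dot, vsub, geod.
    rewrite expand_geod, Hy, Hv, Hyv. fold r a b.
    assert (E : cos t ^ 2 * 1 + sin t ^ 2 * 1 + r + 2 * cos t * sin t * 0 -
               2 * cos t * a - 2 * sin t * b = f t).
    { unfold f. pose proof (sin2_cos2 t). unfold Rsqr in *. nra. }
    rewrite E. fold k.
    pose proof (Hf t).
    assert (Hq : 0 < sqrt (f t)) by (apply sqrt_lt_R0; auto).
    unfold Rpower. rewrite ln_mult; [| lra | apply exp_pos]. rewrite ln_exp.
    assert (ln (f t) = 2 * ln (sqrt (f t))).
    { rewrite <- (sqrt_sqrt (f t)) at 1 by lra. rewrite ln_mult by lra. ring. }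
    rewrite H0. field. }
  rewrite HL.
  set (F0 := f 0).
  assert (HF0 : F0 = 1 + r - 2 * a) by (unfold F0, f; rewrite cos_0, sin_0; ring).
  assert (HF0p : 0 < F0) by apply Hf.
  set (G' := fun t => - k / 2 * ((2 * a * sin t - 2 * b * cos t) / f t)).
  exists (k * b / F0), (- k * a / F0 + 2 * k * b^2 / F0^2).
  split.
  { exists G'. split; [| split].
    - intro t. apply is_derive_Reals. unfold f. pose proof (Hf t) as Ht. unfold f in Ht.
      auto_derive; [lra|]. unfold G', f. field. lra.
    - unfold G'. fold F0. rewrite cos_0, sin_0. field. lra.
    - apply is_derive_Reals. unfold G', f. pose proof (Hf 0) as Ht. unfold f in Ht.
      auto_derive; [lra|]. rewrite cos_0, sin_0 in *. rewrite HF0. field.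
      rewrite <- HF0. lra. }
  split.
  - intro HN. assert (k = 0) by (unfold k; lra). rewrite H. split.
    + field. lra.
    + unfold ric_sphere. replace (- 0 * a / F0 + 2 * 0 * b ^ 2 / F0 ^ 2) with 0 by (field; lra).
      lra.
  - intro HN. assert (Hkp : 0 < k) by (unfold k in *; lra).
    replace (- alpha - INR n) with (- k) by (unfold k; ring).
    unfold ric_sphere.
    replace (INR n - 1 - (- k * a / F0 + 2 * k * b ^ 2 / F0 ^ 2) - / - k * (k * b / F0) ^ 2)
      with (INR n - 1 + k * ((4 * a * F0 - 4 * b^2) / (4 * F0^2))) by (field; lra).
    assert ((4 * a * F0 - 4 * b^2) / (4 * F0^2) >= - 1/4).
    { apply Rle_ge. apply Rmult_le_reg_r with (4 * F0^2). nra.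
      replace ((4 * a * F0 - 4 * b ^ 2) / (4 * F0 ^ 2) * (4 * F0 ^ 2)) with (4 * a * F0 - 4 * b ^ 2) by (field; lra).
      rewrite HF0. rewrite HF0 in HF0p. nra. }
    nra.
Qed.
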